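(* Let $G$ be a finite simple graph of order $n$ without isolated vertices such that its maximum degree is $\Delta(G)=n-1$. Then $\gamma_t(G)=2$ and $TDV(v)\le n-1$ for every $v\in V(G)$; moreover $TDV(v)=n-1$ if and only if $\deg(v)=n-1$.
   Context: A set $D \subseteq V(G)$ is a total dominating set of $G$ if every vertex of $G$ has a neighbor in $D$. $\gamma_t(G)$ is the minimum cardinality of a total dominating set; a minimum one is a $\gamma_t(G)$-set. $TDV(v)$ is the number of $\gamma_t(G)$-sets containing $v$. *)

(* Defs.v *)
From mathcomp Require Import all_boot.
Set Implicit Arguments. Unset Strict Implicit. Unset Printing Implicit Defensive.

(* A finite simple graph: vertex type T : finType, adjacency e : rel T that is
   symmetric and irreflexive (hypotheses stated in the theorem). *)

Section TotalDomination.
Variables (T : finType) (e : rel T).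

Definition nbh (v : T) : {set T} := [set u | e v u].
Definition deg (v : T) : nat := #|nbh v|.

Definition is_tds (D : {set T}) : bool := [forall v, [exists u in D, e v u]].

(* gamma_t(G): minimum cardinality of a total dominating set
   (defaults to #|T| if none exists; irrelevant without isolated vertices) *)
Definition gamma_t : nat := \big[minn/#|T|]_(D : {set T} | is_tds D) #|D|.

Definition is_gamma_t_set (D : {set T}) : bool := is_tds D && (#|D| == gamma_t).

Definition TDV (v : T) : nat := #|[set D : {set T} | is_gamma_t_set D & v \in D]|.

End TotalDomination.

(* Main.v *)
Require Import Defs.
From mathcomp Require Import all_boot.
Set Implicit Arguments. Unset Strict Implicit. Unset Printing Implicit Defensive.

Lemma bigmin_le (A : eqType) (s : seq A) x0 (F : A -> nat) (P : pred A) a :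
  a \in s -> P a -> \big[minn/x0]_(i <- s | P i) F i <= F a.
Proof.
elim: s => // b s IH; rewrite inE big_cons => /orP [/eqP <- ->|ha hp].
  exact: geq_minl.
case: (P b); last exact: IH.
by apply: leq_trans (geq_minr _ _) (IH ha hp).
Qed.

Section S.
Variables (T : finType) (e : rel T).
Hypotheses (e_sym : symmetric e) (e_irr : irreflexive e).

Lemma nbh_sub v : nbh e v \subset [set~ v].
Proof.
apply/subsetP=> x; rewrite in_setC1 inE => h; apply/eqP=> ex; subst x.
by rewrite e_irr in h.
Qed.

Lemma deg_le v : deg e v <= #|T|.-1.
Proof. by rewrite /deg -(cardsC1 v); apply: subset_leq_card; apply: nbh_sub. Qed.

Lemma full_adj v : deg e v = #|T|.-1 -> forall x, x != v -> e v x.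
Proof.
move=> hd x hx.
have : nbh e v == [set~ v].
  by rewrite eqEcard nbh_sub /= (cardsC1 v) -hd.
move/eqP=> h; have hx' : x \in [set~ v] by rewrite in_setC1.
by move: hx'; rewrite -h inE.
Qed.

Lemma tds_ge2 (w : T) D : is_tds e D -> 2 <= #|D|.
Proof.
move/forallP=> h.
have /existsP [u /andP [uD _]] := h w.
have /existsP [u' /andP [u'D uu']] := h u.
have neq : u != u' by apply/eqP=> eq; subst u'; rewrite e_irr in uu'.
have : [set u; u'] \subset D by apply/subsetP=> x; rewrite !inE => /orP [] /eqP ->.
by move/subset_leq_card; rewrite cards2 neq.
Qed.

Lemma pair_tds v u : deg e v = #|T|.-1 -> u != v -> is_tds e [set v; u].
Proof.
move=> hd hu; apply/forallP=> x.
case: (eqVneq x v) => [->|hx].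
  by apply/existsP; exists u; rewrite !inE eqxx orbT /= full_adj.
by apply/existsP; exists v; rewrite !inE eqxx /= e_sym full_adj.
Qed.

Lemma gamma2 w : deg e w = #|T|.-1 -> 0 < deg e w -> gamma_t e = 2.
Proof.
move=> hd hpos.
have [u hu] : exists u, u \in nbh e w.
  by move: hpos; rewrite /deg card_gt0 => /set0Pn.
have huw : u != w.
  by have := subsetP (nbh_sub w) u hu; rewrite in_setC1.
have T2 : 2 <= #|T|.
  move: hpos; rewrite hd. case: #|T| => [|[|n]] //.
apply/eqP; rewrite eqn_leq; apply/andP; split.
  have := bigmin_le #|T| (fun D : {set T} => #|D|) (mem_index_enum [set w; u]) (pair_tds hd huw).
  rewrite /gamma_t => /leq_trans; apply.
  by rewrite cards2 eq_sym huw.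
rewrite /gamma_t; apply: (big_ind (fun m => 2 <= m)) => //.
  by move=> a b ha hb; rewrite leq_min ha hb.
by move=> D; apply: tds_ge2.
Qed.
End S.

Theorem proposition2p13 (T : finType) (e : rel T)
  (e_sym : symmetric e) (e_irr : irreflexive e)
  (no_isolated : forall v : T, 0 < deg e v)
  (max_deg : exists w : T, deg e w = #|T|.-1) :
  gamma_t e = 2 /\
  (forall v : T, TDV e v <= #|T|.-1) /\
  (forall v : T, TDV e v = #|T|.-1 <-> deg e v = #|T|.-1).
Proof.
have [w hw] := max_deg.
have g2 := gamma2 e_sym e_irr hw (no_isolated w).
have le_deg : forall v, TDV e v <= deg e v.
  move=> v; rewrite /TDV /deg.
  apply: leq_trans (leq_imset_card (fun u => [set v; u]) (nbh e v)).
  apply: subset_leq_card; apply/subsetP=> D; rewrite inE /is_gamma_t_set g2.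
  case/andP=> /andP [htds /eqP c2] vD.
  have /existsP [u /andP [uD vu]] := forallP htds v.
  apply/imsetP; exists u; first by rewrite inE.
  have neq : v != u by apply/eqP=> eq; subst u; rewrite e_irr in vu.
  apply/eqP; rewrite eq_sym eqEcard cards2 neq c2 leqnn andbT.
  by apply/subsetP=> x; rewrite !inE => /orP [] /eqP ->.
have le1 : forall v, TDV e v <= #|T|.-1.
  by move=> v; apply: leq_trans (le_deg v) (deg_le e_irr v).
split=> //; split=> // v; split=> hv.
  apply/eqP; rewrite eqn_leq deg_le //= -hv; exact: le_deg.
apply/eqP; rewrite eqn_leq le1 /= -(cardsC1 v).
rewrite -(card_in_imset (f := fun u => [set v; u])); last first.
  move=> a b; rewrite !in_setC1 => ha hb eab.
  have : a \in [set v; b] by rewrite -eab !inE eqxx orbT.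
  by rewrite !inE (negbTE ha) /= => /eqP.
apply: subset_leq_card; apply/subsetP=> D /imsetP [u]; rewrite in_setC1 => hu ->.
rewrite inE /is_gamma_t_set g2 !inE eqxx /= andbT pair_tds // /=.
by rewrite cards2 (eq_sym v) hu.
Qed.
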